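(* Let $(\mathcal G,c,v_0,v_1)$ be a properly embedded doubly marked finite weighted planar map (with properly embedded dual) such that for every $x\in\mathcal V\mathcal G$ every point $p$ of the metric graph with $\mathfrak h(p)=\mathfrak h(x)$ is a vertex. Let $a\in(0,1)$ with $\mathfrak h^{-1}(a)\subset\mathcal V\mathcal G$ nonempty, and let $X^{\mu_a}$ be the random walk on $(\mathcal G,c)$ with $X_0$ distributed according to $\mu_a$. Let $N\in\mathbb N$ and $a_0=a,a_1,\dots,a_N\in(0,1)$ be admissible, i.e. $\mathbb P_{\mu_a}(\mathfrak h(X_{n+1})=a_{n+1}\mid\mathfrak h(X_n)=a_n)>0$ for $n=0,\dots,N-1$. Then for every $i\in\{0,\dots,N\}$ and every $x_i\in\mathfrak h^{-1}(a_i)$, $$\mathbb P_{\mu_a}\big(X_i=x_i\ \big|\ \{\mathfrak h(X_n)=a_n\}_{n=1}^N\big)=\mu_{a_i}(x_i).$$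
   Context: A doubly marked finite weighted planar map $(\mathcal G,c,v_0,v_1)$ is a finite connected planar multigraph with positive edge conductances and marked vertices $v_0,v_1$, properly embedded in $\mathcal C_{2\pi}=\mathbb R/2\pi\mathbb Z\times\mathbb R$ (non-crossing edges, $v_0$ at $-\infty$, $v_1$ at $+\infty$), with its dual properly embedded (each edge crossed once by a dual edge joining its two incident faces). The random walk moves $x\to y$ with probability $c_{xy}/\pi(x)$. Voltage $\mathfrak h$: $\mathfrak h(v_0)=0$, $\mathfrak h(v_1)=1$, harmonic elsewhere; extended to the metric graph $\mathbb G$ (each edge an isometric copy of $[0,1]$) by linear interpolation along edges. $\nabla\mathfrak h(e)=c_e(\mathfrak h(e^+)-\mathfrak h(e^-))$; an edge is harmonically oriented if $\mathfrak h(e^+)\ge\mathfrak h(e^-)$; $\eta=\sum\nabla\mathfrak h(e)$ over harmonically oriented edges with tail $v_0$. For $x\in\mathcal V\mathcal G$, $\mathrm{length}(x)=\sum\nabla\mathfrak h(e)$ over harmonically oriented edges with head $x$ (the length of the horizontal segment of $x$ in the Smith diagram). For $a\in(0,1)$, $\mu_a(x)=\mathrm{length}(x)/\eta$ for $x\in\mathfrak h^{-1}(a)$; this is a probability measure on $\mathfrak h^{-1}(a)$. *)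

(* Defs.v *)
From HB Require Import structures.
From mathcomp Require Import all_boot all_order all_fingroup all_algebra.
From mathcomp Require Import reals.
Set Implicit Arguments. Unset Strict Implicit. Unset Printing Implicit Defensive.
Import Order.TTheory GRing.Theory Num.Theory.
Local Open Scope ring_scope.

(* V : vertices, D : darts (oriented edges).  tail d is the tail vertex of  *)
(* dart d, alpha is the fixed-point-free involution reversing darts (an     *)
(* edge is an alpha-orbit {d, alpha d}), sigma is the rotation system: the  *)
(* cyclic order of darts around each vertex.  Faces are the orbits of       *)
(* alpha * sigma (i.e. d |-> sigma (alpha d)).  Loops and multiple edges    *)
(* are allowed.                                                              *)

Section Maps.
Variables (R : realType) (V D : finType).
Variables (tail : D -> V) (alpha sigma : {perm D}) (c : D -> R).

Definition head (d : D) : V := tail (alpha d).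

Definition is_map : Prop :=
  [/\ (forall d, alpha (alpha d) = d),
      (forall d, alpha d != d),
      (forall d, tail (sigma d) = tail d) &
      (forall d d', tail d = tail d' -> d' \in porbit sigma d)].

Definition adj (x y : V) : bool := [exists d, (tail d == x) && (head d == y)].

Definition connected_graph : Prop := forall x y : V, connect adj x y.

(* Euler's formula V - E + F = 2 : the map is a genus-0 (planar/spherical)
   cellular embedding of the connected graph. *)
Definition planar : Prop :=
  (#|V| + #|porbits (alpha * sigma)| = 2 + #|D|./2)%N.

Definition planar_map : Prop := [/\ is_map, connected_graph & planar].

Definition conductance : Prop :=
  (forall d, 0 < c d) /\ (forall d, c (alpha d) = c d).

Definition pi (x : V) : R := \sum_(d | tail d == x) c d.
Definition trans (x y : V) : R :=
  (\sum_(d | (tail d == x) && (head d == y)) c d) / pi x.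

Definition is_voltage (v0 v1 : V) (h : V -> R) : Prop :=
  [/\ h v0 = 0, h v1 = 1 &
      forall x, x != v0 -> x != v1 ->
        \sum_(d | tail d == x) c d * (h (head d) - h x) = 0].

Definition grad (h : V -> R) (d : D) : R := c d * (h (head d) - h (tail d)).
Definition harm_oriented (h : V -> R) (d : D) : bool := h (tail d) <= h (head d).

Definition eta (v0 : V) (h : V -> R) : R :=
  \sum_(d | harm_oriented h d && (tail d == v0)) grad h d.

Definition length (h : V -> R) (x : V) : R :=
  \sum_(d | harm_oriented h d && (head d == x)) grad h d.

Definition mu (v0 : V) (h : V -> R) (a : R) (x : V) : R :=
  if h x == a then length h x / eta v0 h else 0.

(* Points of the metric graph with value t are all vertices: no interior
   point of an edge (linear interpolation of h along the edge) takes value t. *)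
Definition level_in_vertices (h : V -> R) (t : R) : Prop :=
  forall (d : D) (s : R), 0 < s < 1 ->
    (1 - s) * h (tail d) + s * h (head d) != t.

Definition walk_prob (start : V -> R) (N : nat)
    (E : pred {ffun 'I_N.+1 -> V}) : R :=
  \sum_(p : {ffun 'I_N.+1 -> V} | E p)
     start (p ord0) *
     \prod_(n < N) trans (p (inord n)) (p (inord n.+1)).

Definition walk_cond (start : V -> R) (N : nat)
    (E F : pred {ffun 'I_N.+1 -> V}) : R :=
  walk_prob start [pred p | E p && F p] / walk_prob start F.

End Maps.

Arguments walk_prob {R V D} tail alpha c start N E.
Arguments walk_cond {R V D} tail alpha c start N E F.

(* Main.v *)
Require Import Defs.
From HB Require Import structures.
From mathcomp Require Import all_boot all_order all_fingroup all_algebra.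
From mathcomp Require Import reals.
From mathcomp Require Import ring lra.
Import Order.TTheory GRing.Theory Num.Theory.
Local Open Scope ring_scope.

Lemma nz_ex_gen (R : realType) (I : finType) (P : pred I) (F : I -> R) :
  \sum_(i | P i) F i != 0 -> exists i, P i && (F i != 0).
Proof.
move=> H; case: (boolP [exists i, P i && (F i != 0)]) => [/existsP //|].
rewrite negb_exists => /forallP Hn.
move: H; rewrite big1 ?eqxx // => i Pi; have := Hn i; rewrite Pi /= negbK => /eqP; done.
Qed.

Section Paths.
Variables (R : realType) (V : finType) (st : V -> R) (tr : V -> V -> R)
  (lev : V -> R) (as_ : nat -> R).

Definition wt M (p : {ffun 'I_M.+1 -> V}) : R :=
  st (p ord0) * \prod_(n < M) tr (p (inord n)) (p (inord n.+1)).

Definition init M (q : {ffun 'I_M.+2 -> V}) : {ffun 'I_M.+1 -> V} :=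
  [ffun j : 'I_M.+1 => q (inord j)].

Definition ext M (p : {ffun 'I_M.+1 -> V}) (y : V) : {ffun 'I_M.+2 -> V} :=
  [ffun j : 'I_M.+2 => if (j <= M)%N then p (inord j) else y].

Arguments wt {M}. Arguments init {M}. Arguments ext {M}.

Lemma init_inord M (q : {ffun 'I_M.+2 -> V}) n : (n <= M)%N -> init q (inord n) = q (inord n).
Proof.
move=> nM; rewrite ffunE; congr (q _); apply: val_inj => /=.
by rewrite !inordK // ltnS // (leq_trans nM).
Qed.

Lemma init_ext M (p : {ffun 'I_M.+1 -> V}) y : init (ext p y) = p.
Proof.
apply/ffunP => j; rewrite !ffunE inordK; last by apply: (leq_trans (ltn_ord j)).
rewrite -ltnS ltn_ord; congr (p _); apply: val_inj; rewrite /= inordK //.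
Qed.

Lemma ext_init M (q : {ffun 'I_M.+2 -> V}) : ext (init q) (q (inord M.+1)) = q.
Proof.
apply/ffunP => j; rewrite ffunE; case: ifP => jM.
  by rewrite init_inord //; congr (q _); apply: val_inj; rewrite /= inordK // ltnS (leq_trans jM).
congr (q _); apply: val_inj; rewrite /= inordK //.
by apply/eqP; rewrite eqn_leq ltnNge jM /= -ltnS ltn_ord.
Qed.

Lemma ext_last M (p : {ffun 'I_M.+1 -> V}) y : ext p y (inord M.+1) = y.
Proof. by rewrite ffunE inordK // ltnn. Qed.

Lemma sum_ext M (G : {ffun 'I_M.+1 -> V} -> V -> R) :
  \sum_(q : {ffun 'I_M.+2 -> V}) G (init q) (q (inord M.+1)) =
  \sum_(p : {ffun 'I_M.+1 -> V}) \sum_y G p y.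
Proof.
rewrite pair_bigA /= (reindex (fun pr => ext pr.1 pr.2)) /=.
  by apply: eq_bigr => -[p y] _ /=; rewrite init_ext ext_last.
exists (fun q => (init q, q (inord M.+1))) => [[p y] _|q _] /=.
  by rewrite init_ext ext_last.
exact: ext_init.
Qed.

Lemma sum_one (G : {ffun 'I_1 -> V} -> R) :
  \sum_(p : {ffun 'I_1 -> V}) G p = \sum_y G [ffun => y].
Proof.
rewrite (reindex (fun y => [ffun => y])) //.
exists (fun p : {ffun 'I_1 -> V} => p ord0) => [y _|p _]; first by rewrite ffunE.
by apply/ffunP => j; rewrite ffunE (ord1 j).
Qed.

Lemma wt_succ M (q : {ffun 'I_M.+2 -> V}) :
  wt q = wt (init q) * tr (q (inord M)) (q (inord M.+1)).
Proof.
rewrite /wt big_ord_recr /= mulrA; congr (_ * _ * tr (q _) (q _)).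
  by rewrite ffunE; congr (st (q _)); apply: val_inj; rewrite /= inordK.
apply: eq_bigr => n _; rewrite !init_inord //; exact: ltnW (ltn_ord n).
Qed.

Definition E M (p : {ffun 'I_M.+1 -> V}) : bool :=
  all (fun n => lev (p (inord n)) == as_ n) (iota 0 M.+1).

Arguments E {M}.

Lemma E_succ M (q : {ffun 'I_M.+2 -> V}) :
  E q = E (init q) && (lev (q (inord M.+1)) == as_ M.+1).
Proof.
rewrite /E; have := iotaD 0 M.+1 1; rewrite addn1 add0n => ->.
rewrite all_cat; congr (_ && _); last by rewrite /= andbT.
apply: eq_in_all => n; rewrite mem_iota add0n ltnS => /andP [_ nM].
by rewrite init_inord.
Qed.


Lemma E_lev M (p : {ffun 'I_M.+1 -> V}) n : E p -> (n <= M)%N -> lev (p (inord n)) = as_ n.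
Proof.
by move=> /allP H nM; apply/eqP; apply: H; rewrite mem_iota add0n ltnS nM.
Qed.

Lemma part_lem (I J : finType) (P : pred I) (f : I -> J) (F : I -> R) (g : J -> R) :
  \sum_(i | P i) F i * g (f i) = \sum_j (\sum_(i | P i && (f i == j)) F i) * g j.
Proof.
rewrite (partition_big f predT) //; apply: eq_bigr => j _; rewrite mulr_suml.
by apply: eq_bigr => i /andP [_ /eqP ->].
Qed.

Variables (m : nat -> V -> R) (N : nat) (good : pred V).
Hypothesis Hm0 : forall y, st y = m 0 y.
Hypothesis Hmlev : forall n y, lev y != as_ n -> m n y = 0.
Hypothesis HK : forall n, (n < N)%N -> exists K, K != 0 /\ forall y,
  \sum_x m n x * (if lev y == as_ n.+1 then tr x y else 0) = K * m n.+1 y.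
Hypothesis Hst : forall y, st y != 0 -> good y.
Hypothesis Htr : forall x y, tr x y != 0 -> good y.
Hypothesis HS : forall n, (n < N)%N -> exists s, s != 0 /\ forall z,
  lev z = as_ n -> good z -> \sum_y (if lev y == as_ n.+1 then tr z y else 0) = s.

Lemma wt_good M (p : {ffun 'I_M.+1 -> V}) : wt p != 0 -> good (p (inord M)).
Proof.
case: M p => [|M] p.
  rewrite /wt big_ord0 mulr1 => /Hst; congr (good (p _)); apply: val_inj; by rewrite /= inordK.
by rewrite (wt_succ _ p) mulf_eq0 negb_or => /andP [_ /Htr].
Qed.

Lemma PF M : (M <= N)%N -> exists Z, Z != 0 /\ forall y,
  \sum_(p : {ffun 'I_M.+1 -> V} | E p && (p (inord M) == y)) wt p = Z * m M y.
Proof.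
elim: M => [|M IH] MN.
  exists 1; split; first exact: oner_neq0.
  move=> y; rewrite big_mkcond sum_one (bigD1 y) //= big1 ?addr0.
    rewrite !ffunE eqxx andbT /E /= andbT /wt big_ord0 mulr1 ffunE mul1r.
    rewrite ffunE; case: ifP => hy; first exact: Hm0.
    by rewrite Hmlev // hy.
  by move=> y' ny; rewrite ffunE (negPf ny) andbF.
have [Z [Zn HZ]] := IH (ltnW MN).
have [K [Kn HKy]] := HK M MN.
exists (Z * K); split; first by rewrite mulf_neq0.
move=> y.
pose G (p : {ffun 'I_M.+1 -> V}) y' := if E p && (lev y' == as_ M.+1) && (y' == y)
  then wt p * tr (p (inord M)) y' else 0.
rewrite big_mkcond (eq_bigr (fun q => G (init q) (q (inord M.+1)))); last first.
  by move=> q _; rewrite /G E_succ wt_succ init_inord // andbA.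
rewrite sum_ext.
rewrite (eq_bigr (fun p => if E p then wt p * (if lev y == as_ M.+1 then tr (p (inord M)) y else 0) else 0)); last first.
  move=> p _; rewrite (bigD1 y) //= big1 ?addr0; last by move=> y' ny; rewrite /G (negPf ny) andbF.
  rewrite /G eqxx andbT; case: (E p) => //=; case: ifP => //; by rewrite mulr0.
rewrite -big_mkcond /= (part_lem _ _ _ (fun p : {ffun 'I_M.+1 -> V} => p (inord M)) _ (fun x => if lev y == as_ M.+1 then tr x y else 0)).
rewrite (eq_bigr (fun x => Z * (m M x * (if lev y == as_ M.+1 then tr x y else 0)))); last first.
  by move=> x _; rewrite HZ mulrA.
by rewrite -mulr_sumr HKy mulrA.
Qed.

Lemma SF i M : (i <= M)%N -> (M <= N)%N -> exists C, C != 0 /\ forall x,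
  \sum_(p : {ffun 'I_M.+1 -> V} | E p && (p (inord i) == x)) wt p = C * m i x.
Proof.
elim: M => [|M IH] iM MN.
  by move: iM; rewrite leqn0 => /eqP ->; apply: PF.
case: (eqVneq i M.+1) => [->|ni]; first exact: PF.
have iM' : (i <= M)%N by rewrite -ltnS ltn_neqAle ni iM.
have [C [Cn HC]] := IH iM' (ltnW MN).
have [s [sn Hs]] := HS M MN.
exists (C * s); split; first by rewrite mulf_neq0.
move=> x.
pose G (p : {ffun 'I_M.+1 -> V}) y' := if E p && (p (inord i) == x) && (lev y' == as_ M.+1)
  then wt p * tr (p (inord M)) y' else 0.
rewrite big_mkcond (eq_bigr (fun q => G (init q) (q (inord M.+1)))); last first.
  move=> q _; rewrite /G E_succ wt_succ !init_inord //.
  by case: (E (init q)); case: (q (inord i) == x); rewrite /= ?andbF ?andbT.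
rewrite sum_ext.
rewrite (eq_bigr (fun p => if E p && (p (inord i) == x) then wt p * s else 0)); last first.
  move=> p _; rewrite /G; case Ep: (E p && (p (inord i) == x)); last by rewrite big1.
  rewrite /=; have [w0|wn] := eqVneq (wt p) 0.
    by rewrite w0 mul0r big1 // => y' _; case: ifP; rewrite ?mul0r.
  rewrite -(Hs (p (inord M))); last exact: wt_good.
    by rewrite mulr_sumr; apply: eq_bigr => y' _; case: ifP; rewrite ?mulr0.
  by apply: E_lev => //; case/andP: Ep.
by rewrite -big_mkcond -mulr_suml HC mulrAC.
Qed.

Lemma final i x : (i <= N)%N -> \sum_x m i x = 1 ->
  (\sum_(p : {ffun 'I_N.+1 -> V} | E p && (p (inord i) == x)) wt p) /
  (\sum_(p : {ffun 'I_N.+1 -> V} | E p) wt p) = m i x.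
Proof.
move=> iN Hsum; have [C [Cn HC]] := SF i N iN (leqnn N).
rewrite HC (partition_big (fun p : {ffun 'I_N.+1 -> V} => p (inord i)) predT) //=.
rewrite (eq_bigr (fun y => C * m i y)); last by move=> y _; exact: HC.
by rewrite -mulr_sumr Hsum mulr1 mulrC mulKf.
Qed.

End Paths.

Section Local.
Variables (R : realType) (V D : finType) (tail : D -> V) (alpha : {perm D}) (c : D -> R) (v0 v1 : V) (h : V -> R).
Hypothesis alpha2 : forall d, alpha (alpha d) = d.
Hypothesis cpos : forall d, 0 < c d.
Hypothesis calpha : forall d, c (alpha d) = c d.
Hypothesis h0 : h v0 = 0.
Hypothesis h1 : h v1 = 1.
Hypothesis harm : forall x, x != v0 -> x != v1 ->
   \sum_(d | tail d == x) c d * (h (Defs.head tail alpha d) - h x) = 0.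
Hypothesis lvl : forall x, level_in_vertices tail alpha h (h x).

Local Notation hd := (Defs.head tail alpha).

Lemma headA d : hd (alpha d) = tail d.
Proof. by rewrite /Defs.head alpha2. Qed.

Lemma neq_level d : h (tail d) != h (hd d).
Proof.
apply/negP => /eqP E.
have H12 : (0 < (1/2 : R) < 1) by apply/andP; split; lra.
have := lvl (tail d) d (1/2) H12; rewrite -E; apply/negP; rewrite negbK; apply/eqP. by field.
Qed.

Lemma between d z : ~ (h (tail d) < h z < h (hd d)).
Proof.
move=> /andP [a b].
set s := (h z - h (tail d)) / (h (hd d) - h (tail d)).
have hd0 : h (hd d) - h (tail d) != 0 by rewrite subr_eq0 gt_eqF // (lt_trans a b).
have Hs : 0 < s < 1.
  apply/andP; split.
    by rewrite /s divr_gt0 // subr_gt0 // (lt_trans a b).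
  by rewrite /s ltr_pdivrMr ?subr_gt0 ?(lt_trans a b) // mul1r ltrD2r.
have := lvl z d s Hs; apply/negP; rewrite negbK; apply/eqP.
rewrite /s; field; done.
Qed.

Lemma between' d z : ~ (h (hd d) < h z < h (tail d)).
Proof. by have := between (alpha d) z; rewrite headA. Qed.

Lemma gradA d : grad tail alpha c h (alpha d) = - grad tail alpha c h d.
Proof. rewrite /grad headA calpha. by rewrite -mulrN opprB. Qed.


Lemma hnn d : 0 <= h (tail d).
Proof.
rewrite leNgt; apply/negP => hd0.
have [m _ mmin] := @arg_minP _ R D d predT (fun e => h (tail e)) isT.
have hx : h (tail m) < 0 by apply: le_lt_trans hd0; exact: mmin.
have xv0 : tail m != v0 by apply/negP => /eqP E; move: hx; rewrite E h0 ltxx.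
have xv1 : tail m != v1 by apply/negP => /eqP E; move: hx; rewrite E h1 ltr10.
have H := harm (tail m) xv0 xv1.
rewrite (bigD1 m) //= in H.
have A : 0 < c m * (h (hd m) - h (tail m)).
  apply: mulr_gt0 => //; rewrite subr_gt0 lt_neqAle; apply/andP; split.
    by have := neq_level m; rewrite eq_sym.
  exact: (mmin (alpha m) isT).
have B : 0 <= \sum_(i | (tail i == tail m) && (i != m)) c i * (h (hd i) - h (tail m)).
  apply: sumr_ge0 => i /andP [/eqP ti _]; apply: mulr_ge0; first exact: ltW.
  rewrite subr_ge0; exact: (mmin (alpha i) isT).
move: H A B; set a := c m * _; set b := \sum_(i | _) _; lra.
Qed.

Lemma hnn' d : 0 <= h (hd d).
Proof. exact: hnn. Qed.

Lemma levels t : exists u w, u < t < w /\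
  forall d, h (tail d) = t -> h (hd d) = u \/ h (hd d) = w.
Proof.
have [u [ut Hu]] : exists u, u < t /\
    forall d, h (tail d) = t -> h (hd d) < t -> h (hd d) = u.
  case: (boolP [exists d, (h (tail d) == t) && (h (hd d) < t)]).
  - move/existsP => [d0 /andP [/eqP e0 l0]]; exists (h (hd d0)); split => // d e l.
    case: (ltgtP (h (hd d)) (h (hd d0))) => // cmp.
    + by case: (between' d (hd d0)); rewrite cmp e l0.
    + by case: (between' d0 (hd d)); rewrite cmp e0 l.
  - rewrite negb_exists => /forallP H; exists (t - 1); split; first lra.
    by move=> d e l; have := H d; rewrite e eqxx l.
have [w [tw Hw]] : exists w, t < w /\
    forall d, h (tail d) = t -> t < h (hd d) -> h (hd d) = w.
  case: (boolP [exists d, (h (tail d) == t) && (t < h (hd d))]).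
  - move/existsP => [d0 /andP [/eqP e0 l0]]; exists (h (hd d0)); split => // d e l.
    case: (ltgtP (h (hd d)) (h (hd d0))) => // cmp.
    + by case: (between d0 (hd d)); rewrite cmp e0 l.
    + by case: (between d (hd d0)); rewrite cmp e l0.
  - rewrite negb_exists => /forallP H; exists (t + 1); split; first lra.
    by move=> d e l; have := H d; rewrite e eqxx l.
exists u, w; split; first by rewrite ut tw.
move=> d e; have := neq_level d; rewrite e => ne.
case: (ltgtP (h (hd d)) t) => l.
- by left; apply: Hu.
- by right; apply: Hw.
- by move: ne; rewrite l eqxx.
Qed.


Definition cl x u := \sum_(d | (tail d == x) && (h (hd d) == u)) c d.

Lemma split_sum x u w (F : D -> R) : u != w ->
  (forall d, tail d = x -> h (hd d) = u \/ h (hd d) = w) ->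
  \sum_(d | tail d == x) F d =
  \sum_(d | (tail d == x) && (h (hd d) == u)) F d +
  \sum_(d | (tail d == x) && (h (hd d) == w)) F d.
Proof.
move=> uw H; rewrite (bigID (fun d => h (hd d) == u)) /=; congr (_ + _).
apply: eq_bigl => d; case E: (tail d == x) => //=.
have [->|->] := H d (eqP E); first by rewrite eqxx (negPf uw).
by rewrite eqxx eq_sym (negPf uw).
Qed.

Lemma length_out x : length tail alpha c h x =
  \sum_(d | tail d == x) (if h (hd d) <= h x then c d * (h x - h (hd d)) else 0).
Proof.
rewrite /length (reindex_inj (@perm_inj _ alpha)) /= big_mkcond /= [RHS]big_mkcond /=.
apply: eq_bigr => d _; rewrite /harm_oriented /Defs.head alpha2 -/(hd d).
case E: (tail d == x) => /=; last by rewrite andbF.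
rewrite andbT (eqP E); case: ifP => // _.
have := gradA d; rewrite /grad /Defs.head alpha2 => ->.
by rewrite -/(hd d) (eqP E) -mulrN opprB.
Qed.

Lemma lvstruct x t u w : h x = t -> x != v0 -> x != v1 -> u < t < w ->
  (forall d, tail d = x -> h (hd d) = u \/ h (hd d) = w) ->
  [/\ Defs.pi tail c x = cl x u + cl x w,
      length tail alpha c h x = (t - u) * cl x u &
      (w - t) * cl x w = (t - u) * cl x u].
Proof.
move=> hx xv0 xv1 /andP [ut tw] H.
have uw : u != w by rewrite lt_eqF // (lt_trans ut tw).
split.
- by rewrite /Defs.pi (split_sum _ _ _ _ uw H).
- rewrite length_out (split_sum _ _ _ _ uw H) /cl mulr_sumr [X in _ + X]big1 ?addr0.
    apply: eq_bigr => d /andP [_ /eqP ->]; rewrite hx (ltW ut) mulrC //.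
  move=> d /andP [_ /eqP ->]; rewrite hx.
  by rewrite leNgt tw.
- have := harm x xv0 xv1; rewrite (split_sum _ _ _ _ uw H) /cl.
  rewrite (eq_bigr (fun d => c d * (u - t))); last first.
    by move=> d /andP [_ /eqP ->]; rewrite hx.
  rewrite [X in _ + X = _](eq_bigr (fun d => c d * (w - t))); last first.
    by move=> d /andP [_ /eqP ->]; rewrite hx.
  rewrite -!mulr_suml.
  set A := \sum_(i | _) c i; set B := \sum_(i | _) c i.
  move=> E; apply/eqP; rewrite -subr_eq0; apply/eqP; rewrite -E; ring.
Qed.


Lemma part_cond (f : D -> V) (Q : pred V) (P : pred D) (F : D -> R) :
  \sum_x (if Q x then \sum_(d | (f d == x) && P d) F d else 0) =
  \sum_(d | Q (f d) && P d) F d.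
Proof.
rewrite [RHS]big_mkcond (eq_bigr (fun x => \sum_d (if (f d == x) && (Q (f d) && P d) then F d else 0))).
  rewrite exchange_big /=; apply: eq_bigr => d _.
  rewrite (bigD1 (f d)) //= eqxx /= big1 ?addr0 // => x /negPf.
  by rewrite eq_sym => ->.
move=> x _; rewrite -big_mkcond /=; case: ifP => Qx.
  by apply: eq_bigl => d; case E: (f d == x) => //=; rewrite (eqP E) Qx.
by rewrite big_pred0 // => d; case E: (f d == x) => //=; rewrite (eqP E) Qx.
Qed.

Lemma cxy_sym (t : R) y : \sum_(d | (h (tail d) == t) && (hd d == y)) c d =
  \sum_(d | (tail d == y) && (h (hd d) == t)) c d.
Proof.
rewrite (reindex_inj (@perm_inj _ alpha)) /=; apply: eq_big => d.
  by rewrite headA andbC.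
by rewrite calpha.
Qed.

Lemma pi0 x : Defs.pi tail c x = 0 -> forall d, tail d != x.
Proof.
move=> /eqP; rewrite psumr_eq0 => [/allP H d|d _]; last exact: ltW.
apply/negP => E; have := H d; rewrite mem_index_enum E /= => /(_ isT) /eqP.
by move/eqP; rewrite gt_eqF.
Qed.

Lemma pi_nz d : Defs.pi tail c (tail d) != 0.
Proof. by apply/negP => /eqP /pi0 /(_ d); rewrite eqxx. Qed.

Definition cxy x y := \sum_(d | (tail d == x) && (hd d == y)) c d.

Lemma cxy_pi0 x y : Defs.pi tail c x = 0 -> cxy x y = 0.
Proof. by move/pi0 => H; rewrite /cxy big_pred0 // => d; rewrite (negPf (H d)). Qed.

Lemma trans_sum z t' : \sum_y (if h y == t' then trans tail alpha c z y else 0) =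
  (\sum_(d | (tail d == z) && (h (hd d) == t')) c d) / Defs.pi tail c z.
Proof.
rewrite /trans -/cxy.
rewrite (eq_bigr (fun y => (if h y == t' then \sum_(d | (hd d == y) && ((tail d == z) && (h (hd d) == t'))) c d else 0) / Defs.pi tail c z)).
  rewrite -mulr_suml part_cond; congr (_ / _); apply: eq_bigl => d.
  by case: (h (hd d) == t'); rewrite /= ?andbT ?andbF.
move=> y _; case: ifP => hy; last by rewrite mul0r.
congr (_ / _); apply: eq_bigl => d; rewrite /cxy.
by case E: (hd d == y); rewrite /= ?andbF ?andbT // (eqP E) hy andbT.
Qed.

Hypothesis etanz : Defs.eta tail alpha c v0 h != 0.

Definition kap t u w := (t - u) * (w - t) / ((w - u) * Defs.eta tail alpha c v0 h).

Lemma notv t x : 0 < t < 1 -> h x = t -> (x != v0) && (x != v1).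
Proof.
move=> /andP [t0 t1] hx; apply/andP; split; apply/negP => /eqP E; move: hx; rewrite E.
  by rewrite h0 => E0; move: t0; rewrite -E0 ltxx.
by rewrite h1 => E0; move: t1; rewrite -E0 ltxx.
Qed.

Lemma mu_kap t u w x : 0 < t < 1 -> u < t < w ->
  (forall d, h (tail d) = t -> h (hd d) = u \/ h (hd d) = w) ->
  h x = t -> mu tail alpha c v0 h t x = kap t u w * Defs.pi tail c x.
Proof.
move=> t01 utw H hx; have /andP [xv0 xv1] := notv _ _ t01 hx.
have H' : forall d, tail d = x -> h (hd d) = u \/ h (hd d) = w by move=> d E; apply: H; rewrite E hx.
have [Hpi Hlen E] := lvstruct _ _ _ _ hx xv0 xv1 utw H'.
rewrite /mu hx eqxx /kap Hpi Hlen.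
move: utw E => /andP [ut tw] E.
have wu : w - u != 0 by rewrite subr_eq0 gt_eqF // (lt_trans ut tw).
have cw : cl x w = (t - u) * cl x u / (w - t).
  by rewrite -E; field; rewrite subr_eq0 gt_eqF.
rewrite cw; field; rewrite etanz wu subr_eq0 gt_eqF //.
Qed.


Definition lprop t u w := forall d, h (tail d) = t -> h (hd d) = u \/ h (hd d) = w.

Lemma fwd_lhs t u w t' y : 0 < t < 1 -> u < t < w -> lprop t u w ->
  \sum_x mu tail alpha c v0 h t x * (if h y == t' then trans tail alpha c x y else 0) =
  if h y == t' then kap t u w * \sum_(d | (tail d == y) && (h (hd d) == t)) c d else 0.
Proof.
move=> t01 utw H; case: ifP => hy; last by rewrite big1 // => x _; rewrite mulr0.
rewrite (eq_bigr (fun x => kap t u w * (if h x == t then cxy x y else 0))).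
  rewrite -mulr_sumr -cxy_sym; congr (_ * _).
  exact: (part_cond tail (fun x => h x == t) (fun d => hd d == y) c).
move=> x _; case: ifP => hx; last by rewrite /mu hx mul0r mulr0.
rewrite (mu_kap _ _ _ _ t01 utw H (eqP hx)) /trans -/(cxy x y).
have [p0|pn0] := eqVneq (Defs.pi tail c x) 0.
  by rewrite (cxy_pi0 _ _ p0) p0 !(mul0r, mulr0).
by field.
Qed.

Lemma kap_nz t u w : u < t < w -> kap t u w != 0.
Proof.
move=> /andP [ut tw]; rewrite /kap mulf_neq0 // ?invr_eq0 ?mulf_neq0 //;
  by rewrite subr_eq0 ?gt_eqF ?lt_eqF // (lt_trans ut tw).
Qed.

Lemma fwd t t' : 0 < t < 1 -> 0 < t' < 1 -> exists K,
  (forall d, h (tail d) = t -> h (hd d) = t' -> K != 0) /\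
  forall y, \sum_x mu tail alpha c v0 h t x * (if h y == t' then trans tail alpha c x y else 0)
     = K * mu tail alpha c v0 h t' y.
Proof.
move=> t01 t01'.
have [u [w [utw H]]] := levels t.
have [u' [w' [utw' H']]] := levels t'.
have [ut' tw'] := andP utw'.
have kn := kap_nz _ _ _ utw.
have Hl : forall y, h y = t' -> (y != v0) && (y != v1) by move=> y; apply: notv.
case: (eqVneq t u') => [tu|tu].
  exists (kap t u w * Defs.eta tail alpha c v0 h / (t' - t)); split.
    move=> d _ _; apply: mulf_neq0; first exact: mulf_neq0.
    by rewrite invr_eq0 subr_eq0 tu gt_eqF.
  move=> y; rewrite (fwd_lhs _ _ _ _ _ t01 utw H); case: ifP => hy; last by rewrite /mu hy mulr0.
  have /andP [yv0 yv1] := Hl y (eqP hy).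
  have Hy : forall d, tail d = y -> h (hd d) = u' \/ h (hd d) = w' by move=> d E; apply: H'; rewrite E (eqP hy).
  have [_ Hlen _] := lvstruct _ _ _ _ (eqP hy) yv0 yv1 utw' Hy.
  rewrite /mu hy Hlen -tu /cl; field.
  by rewrite etanz subr_eq0 tu gt_eqF.
case: (eqVneq t w') => [tw|tw].
  exists (kap t u w * Defs.eta tail alpha c v0 h / (t - t')); split.
    move=> d _ _; apply: mulf_neq0; first exact: mulf_neq0.
    by rewrite invr_eq0 subr_eq0 tw; apply/negP => /eqP E; move: tw'; rewrite E ltxx.
  move=> y; rewrite (fwd_lhs _ _ _ _ _ t01 utw H); case: ifP => hy; last by rewrite /mu hy mulr0.
  have /andP [yv0 yv1] := Hl y (eqP hy).
  have Hy : forall d, tail d = y -> h (hd d) = u' \/ h (hd d) = w' by move=> d E; apply: H'; rewrite E (eqP hy).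
  have [_ Hlen E] := lvstruct _ _ _ _ (eqP hy) yv0 yv1 utw' Hy.
  rewrite /mu hy Hlen -E -tw /cl; field.
  rewrite etanz subr_eq0 tw /=; apply/negP => /eqP E2; move: tw'; by rewrite E2 ltxx.
exists 0; split.
  move=> d e1 e2; have [] := H' (alpha d); first by rewrite /Defs.head in e2; rewrite e2.
    by rewrite headA e1 => E; move: tu; rewrite E eqxx.
  by rewrite headA e1 => E; move: tw; rewrite E eqxx.
move=> y; rewrite (fwd_lhs _ _ _ _ _ t01 utw H) mul0r; case: ifP => hy //.
rewrite big_pred0 ?mulr0 // => d; apply/negP => /andP [/eqP ty /eqP ht].
have [] := H' d; first by rewrite ty (eqP hy).
  by move=> E; move: tu; rewrite -ht E eqxx.
by move=> E; move: tw; rewrite -ht E eqxx.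
Qed.


Lemma bwd t t' : 0 < t < 1 -> exists s,
  (forall d, h (tail d) = t -> h (hd d) = t' -> s != 0) /\
  forall z, h z = t -> Defs.pi tail c z != 0 ->
    \sum_y (if h y == t' then trans tail alpha c z y else 0) = s.
Proof.
move=> t01.
have [u [w [utw H]]] := levels t.
have [ut tw] := andP utw.
have wu : w - u != 0 by rewrite subr_eq0; apply/negP => /eqP E; move: (lt_trans ut tw); rewrite E ltxx.
have Hz : forall z, h z = t -> (z != v0) && (z != v1) by move=> z; apply: notv.
have Hd : forall z, h z = t -> forall d, tail d = z -> h (hd d) = u \/ h (hd d) = w.
  by move=> z hz d E; apply: H; rewrite E hz.
case: (eqVneq t' w) => [tw'|tw'].
  exists ((t - u) / (w - u)); split.
    move=> d _ _; rewrite mulf_neq0 ?invr_eq0 // subr_eq0; apply/negP => /eqP E; by move: ut; rewrite E ltxx.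
  move=> z hz pz; rewrite trans_sum tw' -/(cl z w).
  have /andP [zv0 zv1] := Hz z hz.
  have [Hpi _ E] := lvstruct _ _ _ _ hz zv0 zv1 utw (Hd z hz).
  apply/eqP; rewrite eqr_div // -?Hpi //; apply/eqP; rewrite Hpi.
  apply/eqP; rewrite -subr_eq0; apply/eqP.
  have -> : cl z w * (w - u) - (t - u) * (cl z u + cl z w) = (w - t) * cl z w - (t - u) * cl z u by ring.
  by rewrite E subrr.
case: (eqVneq t' u) => [tu'|tu'].
  exists ((w - t) / (w - u)); split.
    move=> d _ _; rewrite mulf_neq0 ?invr_eq0 // subr_eq0; apply/negP => /eqP E; by move: tw; rewrite E ltxx.
  move=> z hz pz; rewrite trans_sum tu' -/(cl z u).
  have /andP [zv0 zv1] := Hz z hz.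
  have [Hpi _ E] := lvstruct _ _ _ _ hz zv0 zv1 utw (Hd z hz).
  apply/eqP; rewrite eqr_div // -?Hpi //; apply/eqP; rewrite Hpi.
  apply/eqP; rewrite -subr_eq0; apply/eqP.
  have -> : cl z u * (w - u) - (w - t) * (cl z u + cl z w) = - ((w - t) * cl z w - (t - u) * cl z u) by ring.
  by rewrite E subrr oppr0.
exists 0; split.
  move=> d e1 e2; have [] := H d e1; rewrite e2 => E.
    by move: tu'; rewrite E eqxx.
  by move: tw'; rewrite E eqxx.
move=> z hz pz; rewrite trans_sum big_pred0 ?mul0r // => d.
apply/negP => /andP [/eqP tz /eqP ht].
have [] := Hd z hz d tz; rewrite ht => E.
  by move: tu'; rewrite E eqxx.
by move: tw'; rewrite E eqxx.
Qed.


Local Notation gr := (grad tail alpha c h).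

Lemma antisym (P : pred D) : (forall d, P (alpha d) = P d) -> \sum_(d | P d) gr d = 0.
Proof.
move=> HP; set X := \sum_(d | P d) gr d.
have : X = - X.
  rewrite {1}/X (reindex_inj (@perm_inj _ alpha)) /= /X -sumrN.
  by apply: eq_big => d; rewrite ?HP // => _; rewrite gradA.
move=> E; lra.
Qed.

Lemma flux_eq t : (exists z, h z = t) -> 0 < t < 1 ->
  \sum_(d | harm_oriented tail alpha h d && (h (hd d) == t)) gr d =
  \sum_(d | tail d == v0) gr d.
Proof.
move=> [z hz] /andP [t0 t1].
have S1 : \sum_(d | h (tail d) < t) gr d = \sum_(d | tail d == v0) gr d.
  rewrite (eq_bigl (fun d => (h (tail d) < t) && predT d)); last by move=> d; rewrite andbT.
  rewrite -(part_cond tail (fun x => h x < t) predT gr) (bigD1 v0) //=.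
  rewrite h0 t0 [X in _ + X]big1 ?addr0; first by apply: eq_bigl => d; rewrite andbT.
  move=> x xv0; case: ifP => // hx.
  have xv1 : x != v1 by apply/negP => /eqP E; move: hx; rewrite E h1 => E1; move: (lt_trans E1 t1); rewrite ltxx.
  transitivity (\sum_(d | tail d == x) c d * (h (hd d) - h x)); last exact: harm.
  apply: eq_big => d; first by rewrite andbT.
  by move=> /andP [/eqP E _]; rewrite /grad E.
rewrite -S1 [RHS](bigID (fun d => h (hd d) < t)) /= [X in _ = X + _]antisym ?add0r.
  apply: eq_bigl => d; rewrite /harm_oriented -/(hd d).
  have nl := neq_level d; have bt := between d z; rewrite hz in bt.
  move: nl bt; rewrite -/(hd d); set a := h (tail d); set b := h (hd d) => nl bt.
  have [a_t|t_a|a_t] := ltgtP a t; have [b_t|t_b|b_t] := ltgtP b t; rewrite /= ?andbF ?andbT //.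
  - by case: bt; rewrite a_t t_b.
  - by rewrite b_t ltW.
  - by rewrite b_t leNgt t_a.
  - by move: nl; rewrite a_t b_t eqxx.
by move=> d; rewrite headA andbC.
Qed.


Lemma eta_tail : Defs.eta tail alpha c v0 h = \sum_(d | tail d == v0) gr d.
Proof.
rewrite /Defs.eta; apply: eq_bigl => d; case E: (tail d == v0); rewrite ?andbF ?andbT //.
by rewrite /harm_oriented (eqP E) h0 -/(hd d) hnn'.
Qed.

Lemma eta_nz' : (exists d, tail d = v0) -> Defs.eta tail alpha c v0 h != 0.
Proof.
move=> [d td]; rewrite eta_tail (bigD1 d) /=; last by rewrite td.
have A : 0 < gr d.
  rewrite /grad td h0 subr0 mulr_gt0 // lt_neqAle hnn' andbT.
  by have := neq_level d; rewrite td h0.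
have B : 0 <= \sum_(i | (tail i == v0) && (i != d)) gr i.
  by apply: sumr_ge0 => i /andP [/eqP ti _]; rewrite /grad ti h0 subr0 mulr_ge0 ?hnn' // ltW.
by rewrite gt_eqF // (lt_le_trans A) // lerDl.
Qed.

Lemma flux t : (exists z, h z = t) -> 0 < t < 1 -> \sum_x mu tail alpha c v0 h t x = 1.
Proof.
move=> ez t01.
rewrite (eq_bigr (fun x => (if h x == t then \sum_(d | (hd d == x) && harm_oriented tail alpha h d) gr d else 0) / Defs.eta tail alpha c v0 h)).
  rewrite -mulr_suml part_cond.
  rewrite (eq_bigl (fun d => harm_oriented tail alpha h d && (h (hd d) == t))); last by move=> d; rewrite andbC.
  by rewrite flux_eq // -eta_tail divff.
move=> x _; rewrite /mu; case: ifP => _; last by rewrite mul0r.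
by congr (_ / _); rewrite /length; apply: eq_bigl => d; rewrite andbC.
Qed.


Lemma nz_ex (P : pred D) (F : D -> R) : \sum_(d | P d) F d != 0 -> exists d, P d.
Proof.
move=> H; case: (boolP [exists d, P d]) => [/existsP //|].
rewrite negb_exists => /forallP Hn.
by move: H; rewrite big_pred0 ?eqxx // => d; apply/negbTE/Hn.
Qed.

Lemma trans_dart x y : trans tail alpha c x y != 0 -> exists d, (tail d == x) && (hd d == y).
Proof. by rewrite /trans mulf_eq0 negb_or => /andP [H _]; apply: (nz_ex _ _ H). Qed.

Lemma main_local (a : R) (N : nat) (as_ : nat -> R) :
  as_ 0%N = a ->
  (forall n, (n <= N)%N -> 0 < as_ n < 1) ->
  (forall n, (n < N)%N ->
     0 < walk_cond tail alpha c (mu tail alpha c v0 h a) N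
           [pred p : {ffun 'I_N.+1 -> V} | h (p (inord n.+1)) == as_ n.+1]
           [pred p : {ffun 'I_N.+1 -> V} | h (p (inord n)) == as_ n]) ->
  forall (i : nat) (xi : V), (i <= N)%N -> h xi = as_ i ->
    walk_cond tail alpha c (mu tail alpha c v0 h a) N
      [pred p : {ffun 'I_N.+1 -> V} | p (inord i) == xi]
      [pred p : {ffun 'I_N.+1 -> V} | [forall n : 'I_N.+1, (1 <= n)%N ==> (h (p n) == as_ n)]]
    = mu tail alpha c v0 h (as_ i) xi.
Proof.
move=> has0 has01 Hadm i xi iN hxi.
set st := mu tail alpha c v0 h a.
set tr := trans tail alpha c.
set m := fun n => mu tail alpha c v0 h (as_ n).
have Hd : forall n, (n < N)%N -> exists d, h (tail d) = as_ n /\ h (hd d) = as_ n.+1.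
  move=> n nN; have := Hadm n nN; rewrite /walk_cond.
  set P1 := walk_prob _ _ _ _ _ _; set P2 := walk_prob _ _ _ _ _ _ => H.
  have : P1 != 0 by apply/negP => /eqP E; move: H; rewrite E mul0r ltxx.
  rewrite /P1 /walk_prob => /nz_ex_gen [p /andP [/andP [/eqP e1 /eqP e2] wp]].
  move: wp; rewrite mulf_eq0 negb_or => /andP [_].
  rewrite (bigD1 (Ordinal nN)) //= mulf_eq0 negb_or => /andP [Ht _].
  have [d /andP [/eqP td /eqP hdd]] := trans_dart _ _ Ht.
  by exists d; rewrite td hdd e1 e2.
have HK : forall n, (n < N)%N -> exists K, K != 0 /\ forall y,
    \sum_x m n x * (if h y == as_ n.+1 then tr x y else 0) = K * m n.+1 y.
  move=> n nN; have [d [e1 e2]] := Hd n nN.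
  have [K [HK1 HK2]] := fwd (as_ n) (as_ n.+1) (has01 n (ltnW nN)) (has01 n.+1 nN).
  by exists K; split; [exact: HK1 d e1 e2 | exact: HK2].
have HS : forall n, (n < N)%N -> exists s, s != 0 /\ forall z,
    h z = as_ n -> (fun z => Defs.pi tail c z != 0) z ->
    \sum_y (if h y == as_ n.+1 then tr z y else 0) = s.
  move=> n nN; have [d [e1 e2]] := Hd n nN.
  have [s [HS1 HS2]] := bwd (as_ n) (as_ n.+1) (has01 n (ltnW nN)).
  by exists s; split; [exact: HS1 d e1 e2 | exact: HS2].
have Hst : forall y, st y != 0 -> (fun z => Defs.pi tail c z != 0) y.
  move=> y; rewrite /st /mu; case: ifP => _; last by rewrite eqxx.
  rewrite mulf_eq0 negb_or => /andP [H _]; have [d /andP [_ /eqP hy]] := nz_ex _ _ H.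
  by rewrite -hy; exact: (pi_nz (alpha d)).
have Htr : forall x y, tr x y != 0 -> (fun z => Defs.pi tail c z != 0) y.
  move=> x y /trans_dart [d /andP [_ /eqP hy]].
  by rewrite -hy; exact: (pi_nz (alpha d)).
have Hm0 : forall y, st y = m 0%N y by move=> y; rewrite /m has0.
have Hmlev : forall n y, h y != as_ n -> m n y = 0 by move=> n y hy; rewrite /m /mu (negPf hy).
have Hsum : \sum_x m i x = 1 := flux (as_ i) (ex_intro _ xi hxi) (has01 i iN).
have Hfin := @final _ _ st tr h as_ m N (fun z => Defs.pi tail c z != 0) Hm0 Hmlev HK Hst Htr HS i xi iN Hsum.
rewrite -[RHS]Hfin /walk_cond /walk_prob.
set Fp := fun p : {ffun 'I_N.+1 -> V} => [forall n : 'I_N.+1, (1 <= n)%N ==> (h (p n) == as_ n)].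
have Fi : forall p, E R V h as_ N p -> Fp p.
  move=> p Ep; apply/forallP => n; apply/implyP => _.
  by have := E_lev _ _ _ _ _ _ _ Ep (leq_ord n); rewrite inord_val => ->.
have Fii : forall p, Fp p -> ~~ E R V h as_ N p -> st (p ord0) = 0.
  move=> p Fpp nE; rewrite /st /mu; case: ifP => // hp0; exfalso; move: nE; apply/negP; rewrite negbK.
  apply/allP => n; rewrite mem_iota add0n ltnS => /andP [_ nN].
  case: n nN => [|n] nN.
    have -> : (inord 0 : 'I_N.+1) = ord0 by apply: val_inj; rewrite /= inordK.
    by rewrite has0.
  by have := forallP Fpp (inord n.+1); rewrite inordK.
have conv : forall A : pred {ffun 'I_N.+1 -> V},
    \sum_(p | A p && Fp p) wt R V st tr N p = \sum_(p | E R V h as_ N p && A p) wt R V st tr N p.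
  move=> A; rewrite big_mkcond [RHS]big_mkcond; apply: eq_bigr => p _.
  case Ep: (E R V h as_ N p); first by rewrite (Fi p Ep) andbT.
  case: ifP => //= /andP [_ Fpp].
  by rewrite /wt (Fii p Fpp) ?Ep // mul0r.
congr (_ / _).
  exact: (conv (fun p => p (inord i) == xi)).
have := conv predT; rewrite (eq_bigr (fun p => wt R V st tr N p)) //.
by under [in RHS]eq_bigl do rewrite andbT.
Qed.

End Local.

Theorem mainTheorem8 (R : realType) (V D : finType) (tail : D -> V)
    (alpha sigma : {perm D}) (c : D -> R) (v0 v1 : V) (h : V -> R)
    (a : R) (N : nat) (as_ : nat -> R) :
  planar_map tail alpha sigma ->
  conductance alpha c ->
  is_voltage tail alpha c v0 v1 h ->
  (forall x : V, level_in_vertices tail alpha h (h x)) ->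
  0 < a < 1 ->
  level_in_vertices tail alpha h a ->
  (exists x : V, h x = a) ->
  as_ 0%N = a ->
  (forall n, (n <= N)%N -> 0 < as_ n < 1) ->
  (forall n, (n < N)%N ->
     0 < walk_cond tail alpha c (mu tail alpha c v0 h a) N
           [pred p : {ffun 'I_N.+1 -> V} | h (p (inord n.+1)) == as_ n.+1]
           [pred p : {ffun 'I_N.+1 -> V} | h (p (inord n)) == as_ n]) ->
  forall (i : nat) (xi : V), (i <= N)%N -> h xi = as_ i ->
    walk_cond tail alpha c (mu tail alpha c v0 h a) N
      [pred p : {ffun 'I_N.+1 -> V} | p (inord i) == xi]
      [pred p : {ffun 'I_N.+1 -> V} | [forall n : 'I_N.+1, (1 <= n)%N ==> (h (p n) == as_ n)]]
    = mu tail alpha c v0 h (as_ i) xi.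
Proof.
move=> [[alpha2 _ _ _] conn _] [cpos calpha] [h0 h1 harm] Hlvl _ _ _ has0 has01 Hadm i xi iN hxi.
have etanz : Defs.eta tail alpha c v0 h != 0.
  apply: (eta_nz' R V D tail alpha c v0 v1 h cpos h0 h1 harm Hlvl).
  have := conn v0 v1; case/connectP => -[|y p] /=.
    by move=> _ E; move: h1; rewrite E h0 => /eqP; rewrite eq_sym oner_eq0.
  by case/andP => /existsP [d /andP [/eqP td _]] _ _; exists d.
exact: (main_local R V D tail alpha c v0 v1 h alpha2 cpos calpha h0 h1 harm Hlvl etanz a N as_ has0 has01 Hadm i xi iN hxi).
Qed.
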